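(* Let $(C;\le_0,\le_1)$ be a compatible 2-preorder and let $\mathcal C_i$ ($i=0,1$) be the family of $\le_i$-up subsets of $C$. Then any two disjoint sets $A,B\subseteq C$ whose complements belong to $\mathcal C_1$ can be separated by a set $D\in\mathcal C_1$ whose complement is also in $\mathcal C_1$ (i.e., $A\subseteq D\subseteq C\setminus B$). If moreover $C$ is finite, then any two such disjoint sets can be separated by a set in the Boolean closure of $\mathcal C_0$ (the 2-base $(\mathcal C_0,\mathcal C_1)$ is interpolable).
   Context: A 2-preorder is a set $C$ with preorders $\le_0,\le_1$ such that $x\le_1y$ implies $x\equiv_0y$. It is compatible if $a\equiv_0b$ implies that there is $c$ with $c\le_1a$ and $c\le_1b$. A set $U$ is $\le_i$-up if $a\in U$ and $a\le_i c$ imply $c\in U$. *)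

(* Defs.v *)
(* the carrier C is a type T, subsets are predicates T -> Prop. *)
From Stdlib Require Import List.
Set Implicit Arguments.

Section Defs.
Variable T : Type.

Definition is_preorder (R : T -> T -> Prop) : Prop :=
  (forall x, R x x) /\ (forall x y z, R x y -> R y z -> R x z).

Definition equiv0 (le0 : T -> T -> Prop) (x y : T) : Prop := le0 x y /\ le0 y x.

Definition two_preorder (le0 le1 : T -> T -> Prop) : Prop :=
  is_preorder le0 /\ is_preorder le1 /\
  (forall x y, le1 x y -> equiv0 le0 x y).

Definition compatible (le0 le1 : T -> T -> Prop) : Prop :=
  forall a b, equiv0 le0 a b -> exists c, le1 c a /\ le1 c b.

Definition up_set (R : T -> T -> Prop) (U : T -> Prop) : Prop :=
  forall a c, U a -> R a c -> U c.

Definition compl (U : T -> Prop) : T -> Prop := fun x => ~ U x.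

Definition subset (U V : T -> Prop) : Prop := forall x, U x -> V x.

Definition disjoint (U V : T -> Prop) : Prop := forall x, U x -> V x -> False.

Definition separates (D A B : T -> Prop) : Prop :=
  subset A D /\ subset D (compl B).

Inductive bool_closure (F : (T -> Prop) -> Prop) : (T -> Prop) -> Prop :=
  | bc_base U : F U -> bool_closure F U
  | bc_compl U : bool_closure F U -> bool_closure F (compl U)
  | bc_union U V : bool_closure F U -> bool_closure F V ->
      bool_closure F (fun x => U x \/ V x)
  | bc_inter U V : bool_closure F U -> bool_closure F V ->
      bool_closure F (fun x => U x /\ V x)
  | bc_ext U V : bool_closure F U -> (forall x, U x <-> V x) ->
      bool_closure F V.

Definition finite_type : Prop := exists l : list T, forall x : T, In x l.

End Defs.

(* Main.v *)
Require Import Defs.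
From Stdlib Require Import List.
From Stdlib Require Import Classical.

Section H.
Variable T : Type.
Variable le0 : T -> T -> Prop.
Hypothesis P0 : is_preorder le0.

Lemma bc_empty : bool_closure (up_set le0) (fun _ : T => False).
Proof.
  apply bc_ext with (U := compl (fun _ : T => True)).
  - apply bc_compl, bc_base. intros a c _ _; exact I.
  - intro x; unfold compl; tauto.
Qed.

Lemma bc_class (a : T) : bool_closure (up_set le0) (equiv0 le0 a).
Proof.
  destruct P0 as [Hr Ht].
  apply bc_ext with (U := fun x => le0 a x /\ compl (fun y => le0 a y /\ ~ le0 y a) x).
  - apply bc_inter.
    + apply bc_base. intros x y H1 H2; eauto.
    + apply bc_compl, bc_base. intros x y [H1 H3] H2; split; eauto.
  - intro x; unfold compl, equiv0; split.
    + intros [H1 H2]; split; auto. apply NNPP; tauto.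
    + intros [H1 H2]; split; auto; tauto.
Qed.

Lemma bc_list (A : T -> Prop) (l : list T) :
  bool_closure (up_set le0) (fun x => exists a, In a l /\ A a /\ equiv0 le0 a x).
Proof.
  induction l as [|a l IH].
  - apply bc_ext with (1 := bc_empty). intro x; split; [tauto|].
    intros [a [[] _]].
  - apply bc_ext with (U := fun x => (A a /\ equiv0 le0 a x) \/
                                  (exists b, In b l /\ A b /\ equiv0 le0 b x)).
    + apply bc_union; [|exact IH].
      destruct (classic (A a)) as [Ha|Ha].
      * apply bc_ext with (1 := bc_class a). intro x; tauto.
      * apply bc_ext with (1 := bc_empty). intro x; tauto.
    + intro x; split.
      * intros [H|[b [Hb H]]]; [exists a; simpl; tauto| exists b; simpl; tauto].
      * intros [b [[Hb|Hb] H]]; [subst; left; tauto | right; exists b; tauto].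
Qed.
End H.

Theorem lemma3p5 (T : Type) (le0 le1 : T -> T -> Prop) :
  two_preorder le0 le1 -> compatible le0 le1 ->
  (forall A B : T -> Prop,
     disjoint A B -> up_set le1 (compl A) -> up_set le1 (compl B) ->
     exists D : T -> Prop,
       up_set le1 D /\ up_set le1 (compl D) /\ separates D A B) /\
  (finite_type T ->
   forall A B : T -> Prop,
     disjoint A B -> up_set le1 (compl A) -> up_set le1 (compl B) ->
     exists D : T -> Prop,
       bool_closure (up_set le0) D /\ separates D A B).
Proof.
  intros [[R0 T0] [[R1 T1] H10]] Hc.
  assert (Hsep : forall A B : T -> Prop,
     disjoint A B -> up_set le1 (compl A) -> up_set le1 (compl B) ->
     separates (fun x => exists a, A a /\ equiv0 le0 a x) A B).
  { intros A B Hd HA HB. split.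
    - intros x Hx. exists x. repeat split; auto.
    - intros x [a [Ha [E1 E2]]] Hb.
      destruct (Hc a x (conj E1 E2)) as [c [Hca Hcx]].
      assert (A c). { apply NNPP; intro N. exact (HA c a N Hca Ha). }
      assert (B c). { apply NNPP; intro N. exact (HB c x N Hcx Hb). }
      exact (Hd c H H0). }
  split.
  - intros A B Hd HA HB. exists (fun x => exists a, A a /\ equiv0 le0 a x).
    split; [|split; [|auto]].
    + intros x y [a [Ha [E1 E2]]] Hxy. destruct (H10 x y Hxy) as [F1 F2].
      exists a; split; auto; split; eauto.
    + intros x y Hn Hxy [a [Ha [E1 E2]]]. apply Hn.
      destruct (H10 x y Hxy) as [F1 F2].
      exists a; split; auto; split; eauto.
  - intros [l Hl] A B Hd HA HB.
    exists (fun x => exists a, A a /\ equiv0 le0 a x). split; [|auto].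
    eapply bc_ext; [exact (@bc_list T le0 (conj R0 T0) A l)|].
    intro x; split.
    + intros [a [_ H]]; exists a; exact H.
    + intros [a H]; exists a; split; auto.
Qed.
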